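(* Let $W_{(\alpha,\beta)}=(T_1,T_2)$ be a 2-variable weighted shift on $\ell^2(\mathbb{Z}_+^2)$, and let $$L=\begin{pmatrix} T_1^*T_1 & T_2^*T_1\\ T_1^*T_2 & T_2^*T_2\end{pmatrix},\qquad R=\begin{pmatrix} T_1T_1^* & T_1T_2^*\\ T_2T_1^* & T_2T_2^*\end{pmatrix}$$ acting on $\ell^2(\mathbb{Z}_+^2)\oplus\ell^2(\mathbb{Z}_+^2)$. For $n\ge 0$ let $\mathcal{K}(n)$ be the closed span of $\{e_{(k_1,k_2)}: k_1+k_2=n\}$. Then $\mathcal{K}(n)\oplus\mathcal{K}(n)$ reduces $L$ and $R$, and, denoting by $L|_{\mathcal{K}(n)}$, $R|_{\mathcal{K}(n)}$ the restrictions to it, $L|_{\mathcal{K}(n)}$ is unitarily equivalent to $$(\alpha_{(0,n)}^2)\oplus\Big[\bigoplus_{i=1}^n\begin{pmatrix}\alpha_{(i,n-i)}^2 & \alpha_{(i-1,n-i+1)}\beta_{(i,n-i)}\\ \alpha_{(i-1,n-i+1)}\beta_{(i,n-i)} & \beta_{(i-1,n-i+1)}^2\end{pmatrix}\Big]\oplus(\beta_{(n,0)}^2)$$ and $R|_{\mathcal{K}(n)}$ is unitarily equivalent to $$(0)\oplus\Big[\bigoplus_{i=1}^n\begin{pmatrix}\alpha_{(i-1,n-i)}^2 & \alpha_{(i-1,n-i)}\beta_{(i-1,n-i)}\\ \alpha_{(i-1,n-i)}\beta_{(i-1,n-i)} & \beta_{(i-1,n-i)}^2\end{pmatrix}\B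ig]\oplus(0).$$
   Context: Given bounded double-indexed sequences of positive reals $\alpha=(\alpha_{\mathbf{k}})$, $\beta=(\beta_{\mathbf{k}})$, $\mathbf{k}=(k_1,k_2)\in\mathbb{Z}_+^2$, the 2-variable weighted shift $W_{(\alpha,\beta)}=(T_1,T_2)$ acts on $\ell^2(\mathbb{Z}_+^2)$ with canonical orthonormal basis $\{e_{\mathbf{k}}\}$ by $T_1e_{\mathbf{k}}=\alpha_{\mathbf{k}}e_{\mathbf{k}+\varepsilon_1}$, $T_2e_{\mathbf{k}}=\beta_{\mathbf{k}}e_{\mathbf{k}+\varepsilon_2}$, with $\varepsilon_1=(1,0)$, $\varepsilon_2=(0,1)$. An operator matrix $(M_{ij})$ acts on $\mathcal{H}\oplus\mathcal{H}$ by $(h_1,h_2)\mapsto(M_{11}h_1+M_{12}h_2,\,M_{21}h_1+M_{22}h_2)$. For $n=0$ the middle direct sum is empty. *)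

(* Defs.v *)
From mathcomp Require Import all_boot all_algebra.
From mathcomp Require Import reals complex.
Set Implicit Arguments. Unset Strict Implicit. Unset Printing Implicit Defensive.
Import GRing.Theory Num.Theory.
Local Open Scope ring_scope.
Local Open Scope complex_scope.

Section Shift.
Variable R : realType.
Local Notation C := R[i].

(* a vector of l^2(Z_+^2) is viewed through its coordinates x k1 k2 = <x, e_(k1,k2)> *)
Definition vec := nat -> nat -> C.
Definition vec2 := (vec * vec)%type.

Variables (alpha beta : nat -> nat -> R).

(* T1 e_k = alpha_k e_(k+eps1) and its adjoint T1^* e_k = alpha_(k-eps1) e_(k-eps1) *)
Definition T1 (x : vec) : vec := fun k1 k2 =>
  if k1 is j.+1 then (alpha j k2)%:C * x j k2 else 0.
Definition T1adj (x : vec) : vec := fun k1 k2 => (alpha k1 k2)%:C * x k1.+1 k2.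
Definition T2 (x : vec) : vec := fun k1 k2 =>
  if k2 is j.+1 then (beta k1 j)%:C * x k1 j else 0.
Definition T2adj (x : vec) : vec := fun k1 k2 => (beta k1 k2)%:C * x k1 k2.+1.

Definition vadd (x y : vec) : vec := fun k1 k2 => x k1 k2 + y k1 k2.

Definition Lop (h : vec2) : vec2 :=
  (vadd (T1adj (T1 h.1)) (T2adj (T1 h.2)), vadd (T1adj (T2 h.1)) (T2adj (T2 h.2))).
Definition Rop (h : vec2) : vec2 :=
  (vadd (T1 (T1adj h.1)) (T1 (T2adj h.2)), vadd (T2 (T1adj h.1)) (T2 (T2adj h.2))).

End Shift.

Definition inKn2 (R : realType) (n : nat) (h : vec2 R) : Prop :=
  forall k1 k2, (k1 + k2 != n)%N -> h.1 k1 k2 = 0 /\ h.2 k1 k2 = 0.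
Definition inKn2perp (R : realType) (n : nat) (h : vec2 R) : Prop :=
  forall k1 k2, (k1 + k2 = n)%N -> h.1 k1 k2 = 0 /\ h.2 k1 k2 = 0.

Definition reduces_Kn2 (R : realType) (n : nat) (T : vec2 R -> vec2 R) : Prop :=
  (forall h, inKn2 n h -> inKn2 n (T h)) /\
  (forall h, inKn2perp n h -> inKn2perp n (T h)).

Definition basis_vec (R : realType) (n : nat) (p : 'I_(n.+1 + n.+1)) : vec2 R :=
  match split p with
  | inl k => (fun k1 k2 => if (k1 == k :> nat) && (k2 == n - k)%N then 1 else 0, fun _ _ => 0)
  | inr k => (fun _ _ => 0, fun k1 k2 => if (k1 == k :> nat) && (k2 == n - k)%N then 1 else 0)
  end.
Definition coord (R : realType) (n : nat) (p : 'I_(n.+1 + n.+1)) (h : vec2 R) : R[i] :=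
  match split p with
  | inl k => h.1 k (n - k)%N
  | inr k => h.2 k (n - k)%N
  end.

Definition restr_mx (R : realType) (n : nat) (T : vec2 R -> vec2 R)
  : 'M[R[i]]_(n.+1 + n.+1) :=
  \matrix_(p, q) coord p (T (basis_vec R q)).

Definition unitary_mx (R : realType) (m : nat) (U : 'M[R[i]]_m) : Prop :=
  U *m (map_mx conjc U)^T = 1%:M /\ (map_mx conjc U)^T *m U = 1%:M.
Definition unitarily_equiv (R : realType) (m : nat) (A B : 'M[R[i]]_m) : Prop :=
  exists U : 'M[R[i]]_m, unitary_mx U /\ B = U *m A *m (map_mx conjc U)^T.

(* The (2n+2)x(2n+2) matrix  (c0) (+) [ (+)_{i=1}^n [[a i, b i],[b i, d i]] ] (+) (cN):
   index 0 is c0, indices 2i-1, 2i carry the i-th 2x2 block, index 2n+1 is cN. *)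
Definition blockdiag (R : realType) (n : nat) (c0 cN : R) (a b d : nat -> R)
  : 'M[R[i]]_(n.+1 + n.+1) :=
  \matrix_(p, q)
    (let p := nat_of_ord p in let q := nat_of_ord q in
     if (p == 0%N) && (q == 0%N) then c0%:C
     else if (p == n.*2.+1) && (q == n.*2.+1) then cN%:C
     else if [&& (0 < p <= n.*2)%N, (0 < q <= n.*2)%N & (p.+1./2 == q.+1./2)%N] then
       (let i := p.+1./2 in
        if odd p && odd q then (a i)%:C
        else if ~~ odd p && ~~ odd q then (d i)%:C
        else (b i)%:C)
     else 0).

(* Main.v *)
Require Import Defs.
From mathcomp Require Import all_boot all_algebra.
From mathcomp Require Import reals complex.
From mathcomp Require Import fingroup perm.
From mathcomp Require Import zify ring.
Import GRing.Theory Num.Theory.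
Local Open Scope ring_scope.
Local Open Scope complex_scope.

Section Proof.
Variable R : realType.
Variables alpha beta : nat -> nat -> R.
Variable n : nat.

Definition tn (t : nat) : nat :=
  if t == 0%N then 0%N else if t == n.*2.+1 then n.*2.+1
  else if odd t then t.+1./2 else (n + t./2)%N.

Lemma tn_lt (t : 'I_(n.+1 + n.+1)) : (tn t < n.+1 + n.+1)%N.
Proof. have := ltn_ord t. rewrite /tn. repeat case: ifP => ?; lia. Qed.

Definition tau (t : 'I_(n.+1+n.+1)) : 'I_(n.+1+n.+1) := Ordinal (tn_lt t).

Lemma tau_inj : injective tau.
Proof.
move=> x y /(congr1 val) /=. have := ltn_ord x; have := ltn_ord y. rewrite /tn.
move=> hx hy H; apply: val_inj => /=; move: hx hy H.
repeat case: ifP => ?; lia.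
Qed.

Definition Aform (p q : nat) : R[i] :=
  if (p <= n)%N then
    if (q <= n)%N then (if p == q then (alpha p (n-p) ^+2)%:C else 0)
    else (if p == (q - n.+1).+1 then (alpha p.-1 (n-p).+1 * beta p (n-p))%:C else 0)
  else if (q <= n)%N then
    (if q == (p - n.+1).+1 then (alpha (p-n.+1) (n-(p-n.+1)) * beta (p - n.+1).+1 (n-(p-n.+1)).-1)%:C else 0)
  else (if p == q then (beta (p-n.+1) (n-(p-n.+1)) ^+2)%:C else 0).

Ltac clean := rewrite ?mulr1 ?mulr0 ?addr0 ?add0r ?mul0r ?mulr1.
Ltac valeq := rewrite ?rmorphXn ?rmorphM ?expr2 /=; clean;
  first [ (f_equal; f_equal; f_equal; lia) | (rewrite mulrC; f_equal; f_equal; f_equal; lia) ].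

Lemma restrL p q : restr_mx n (Lop alpha beta) p q = Aform p q.
Proof.
rewrite mxE /Defs.coord /basis_vec /Aform.
case: (splitP p) => k Hk; case: (splitP q) => k' Hk'; rewrite Hk Hk' /Lop /vadd /T1adj /T2adj /T1 /T2 /=;
move: (nat_of_ord k) (ltn_ord k) (nat_of_ord k') (ltn_ord k') => a ha b hb {Hk Hk' k k' p q};
(case: a ha => [|a] ha); (case E: (n - _)%N => [|m]).
all: repeat (case: ifP => ?); clean.
all: try (exfalso; lia).
all: try done.
all: valeq.
Qed.

Definition Rform (p q : nat) : R[i] :=
  if (p <= n)%N then
    if (q <= n)%N then (if (0 < p)%N && (p == q) then (alpha p.-1 (n-p) ^+2)%:C else 0)
    else (if (0 < p)%N && (q - n.+1 == p.-1)%N then (alpha p.-1 (n-p) * beta p.-1 (n-p))%:C else 0)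
  else if (q <= n)%N then
    (if (p - n.+1 < n)%N && (q == (p - n.+1).+1) then
       (alpha (p - n.+1) (n - (p - n.+1)).-1 * beta (p - n.+1) (n - (p - n.+1)).-1)%:C else 0)
  else (if (p - n.+1 < n)%N && (p == q) then (beta (p - n.+1) (n - (p - n.+1)).-1 ^+2)%:C else 0).

Lemma restrR p q : restr_mx n (Rop alpha beta) p q = Rform p q.
Proof.
rewrite mxE /Defs.coord /basis_vec /Rform.
case: (splitP p) => k Hk; case: (splitP q) => k' Hk'; rewrite Hk Hk' /Rop /vadd /T1adj /T2adj /T1 /T2 /=;
move: (nat_of_ord k) (ltn_ord k) (nat_of_ord k') (ltn_ord k') => a ha b hb {Hk Hk' k k' p q};
(case: a ha => [|a] ha); (case E: (n - _)%N => [|m]).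
all: repeat (case: ifP => ?); clean.
all: try (exfalso; lia).
all: try done.
all: valeq.
Qed.

Lemma tn_spec x : (x < n.+1 + n.+1)%N ->
  (x = 0 /\ tn x = 0 \/ x = n.*2.+1 /\ tn x = n.*2.+1 \/
   odd x /\ (0 < x < n.*2.+1)%N /\ tn x = uphalf x \/
   ~~ odd x /\ (0 < x < n.*2.+1)%N /\ tn x = (n + x./2)%N)%N.
Proof. rewrite /tn => h; repeat case: ifP => ?; lia. Qed.

Lemma bdL (i j : 'I_(n.+1 + n.+1)) :
  blockdiag n (alpha 0%N n ^+ 2) (beta n 0%N ^+ 2)
           (fun i => alpha i (n - i)%N ^+ 2)
           (fun i => alpha i.-1 (n - i).+1 * beta i (n - i)%N)
           (fun i => beta i.-1 (n - i).+1 ^+ 2) i j = Aform (tn i) (tn j).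
Proof. rewrite /Aform; rewrite mxE /=;
  have sx := tn_spec i (ltn_ord i); have sy := tn_spec j (ltn_ord j);
  move: (tn i) (tn j) sx sy (ltn_ord i) (ltn_ord j) => tx ty;
  move: (nat_of_ord i) (nat_of_ord j) => x y sx sy hx hy;
  case: sx => [[-> ->]|[[-> ->]|[[ox [bx ->]]|[ox [bx ->]]]]];
  case: sy => [[-> ->]|[[-> ->]|[[oy [bby ->]]|[oy [bby ->]]]]];
  repeat (case: ifP => ?; try (exfalso; lia)); try done; valeq. Qed.

Lemma bdR (i j : 'I_(n.+1 + n.+1)) :
  blockdiag n 0 0
           (fun i => alpha i.-1 (n - i)%N ^+ 2)
           (fun i => alpha i.-1 (n - i)%N * beta i.-1 (n - i)%N)
           (fun i => beta i.-1 (n - i)%N ^+ 2) i j = Rform (tn i) (tn j).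
Proof. rewrite /Rform; rewrite mxE /=;
  have sx := tn_spec i (ltn_ord i); have sy := tn_spec j (ltn_ord j);
  move: (tn i) (tn j) sx sy (ltn_ord i) (ltn_ord j) => tx ty;
  move: (nat_of_ord i) (nat_of_ord j) => x y sx sy hx hy;
  case: sx => [[-> ->]|[[-> ->]|[[ox [bx ->]]|[ox [bx ->]]]]];
  case: sy => [[-> ->]|[[-> ->]|[[oy [bby ->]]|[oy [bby ->]]]]];
  repeat (case: ifP => ?; try (exfalso; lia)); try done; valeq. Qed.

Lemma ueq (m : nat) (A B : 'M[complex R]_m) (s : 'S_m) :
  (forall i j, B i j = A (s i) (s j)) -> unitarily_equiv A B.
Proof.
move=> H; exists (perm_mx s).
have Hc : map_mx conjc (perm_mx s : 'M[complex R]_m) = perm_mx s.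
  by apply/matrixP => i j; rewrite !mxE conjc_nat.
rewrite /unitary_mx !Hc !tr_perm_mx -!perm_mxM mulgV mulVg perm_mx1; split => //.
apply/matrixP => i j; rewrite -row_permE -col_permE !mxE; exact: H.
Qed.

Lemma redL : reduces_Kn2 n (Lop alpha beta).
Proof.
split=> h H k1 k2 Hk.
{ have H1 : forall x y, (x + y != n)%N -> h.1 x y = 0 by move=> x y /H [].
  have H2 : forall x y, (x + y != n)%N -> h.2 x y = 0 by move=> x y /H [].
  rewrite /Lop /vadd /T1adj /T2adj /T1 /T2 /=.
  case: k1 Hk => [|k1] Hk; case: k2 Hk => [|k2] Hk; split; rewrite ?H1 ?H2 ?mulr0 ?addr0 //.
  all: try (apply/eqP; move/eqP: Hk; lia).
  all: lia. }
{ have H1 : forall x y, (x + y = n)%N -> h.1 x y = 0 by move=> x y /H [].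
  have H2 : forall x y, (x + y = n)%N -> h.2 x y = 0 by move=> x y /H [].
  rewrite /Lop /vadd /T1adj /T2adj /T1 /T2 /=.
  case: k1 Hk => [|k1] Hk; case: k2 Hk => [|k2] Hk; split; rewrite ?H1 ?H2 ?mulr0 ?addr0 //.
  all: try (apply/eqP; move/eqP: Hk; lia).
  all: lia. }
Qed.

Lemma redR : reduces_Kn2 n (Rop alpha beta).
Proof.
split=> h H k1 k2 Hk.
{ have H1 : forall x y, (x + y != n)%N -> h.1 x y = 0 by move=> x y /H [].
  have H2 : forall x y, (x + y != n)%N -> h.2 x y = 0 by move=> x y /H [].
  rewrite /Rop /vadd /T1adj /T2adj /T1 /T2 /=.
  case: k1 Hk => [|k1] Hk; case: k2 Hk => [|k2] Hk; split; rewrite ?H1 ?H2 ?mulr0 ?addr0 //.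
  all: try (apply/eqP; move/eqP: Hk; lia).
  all: lia. }
{ have H1 : forall x y, (x + y = n)%N -> h.1 x y = 0 by move=> x y /H [].
  have H2 : forall x y, (x + y = n)%N -> h.2 x y = 0 by move=> x y /H [].
  rewrite /Rop /vadd /T1adj /T2adj /T1 /T2 /=.
  case: k1 Hk => [|k1] Hk; case: k2 Hk => [|k2] Hk; split; rewrite ?H1 ?H2 ?mulr0 ?addr0 //.
  all: try (apply/eqP; move/eqP: Hk; lia).
  all: lia. }
Qed.

End Proof.

Theorem theorem3p1 (R : realType) (alpha beta : nat -> nat -> R)
  (Hapos : forall k1 k2, 0 < alpha k1 k2) (Hbpos : forall k1 k2, 0 < beta k1 k2)
  (Habnd : exists M : R, forall k1 k2, alpha k1 k2 <= M /\ beta k1 k2 <= M)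
  (n : nat) :
  [/\ reduces_Kn2 n (Lop alpha beta),
      reduces_Kn2 n (Rop alpha beta),
      unitarily_equiv (restr_mx n (Lop alpha beta))
        (blockdiag n (alpha 0%N n ^+ 2) (beta n 0%N ^+ 2)
           (fun i => alpha i (n - i)%N ^+ 2)
           (fun i => alpha i.-1 (n - i).+1 * beta i (n - i)%N)
           (fun i => beta i.-1 (n - i).+1 ^+ 2))
    & unitarily_equiv (restr_mx n (Rop alpha beta))
        (blockdiag n 0 0
           (fun i => alpha i.-1 (n - i)%N ^+ 2)
           (fun i => alpha i.-1 (n - i)%N * beta i.-1 (n - i)%N)
           (fun i => beta i.-1 (n - i)%N ^+ 2))].
Proof.
split; [exact: redL | exact: redR | |].
- apply: (@ueq _ _ _ _ (perm (tau_inj n))) => i j.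
  by rewrite !permE bdL restrL.
- apply: (@ueq _ _ _ _ (perm (tau_inj n))) => i j.
  by rewrite !permE bdR restrR.
Qed.
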